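(* Let $\Lambda$ be a rank-2 Bratteli diagram and let $x$ be an infinite path in $\Lambda$ such that $o(x(0,ne_1))\to\infty$ as $n\to\infty$. Then $x$ is aperiodic: whenever $p,q\in\mathbb N^2$ satisfy $\sigma^p(x)=\sigma^q(x)$, we have $p=q$.
   Context: A $2$-graph is a countable category $\Lambda$ with a functor $d:\Lambda\to\mathbb N^2$ satisfying unique factorisation (if $d(\lambda)=m+n$ there are unique $\mu,\nu$ with $d(\mu)=m,d(\nu)=n,\lambda=\mu\nu$). Vertices = degree-$0$ paths; $r,s$ range/source; $\Lambda^n=d^{-1}(n)$; $e_1=(1,0),e_2=(0,1)$; $vE=E\cap r^{-1}(v)$, $Ev=E\cap s^{-1}(v)$. Row-finite: each $v\Lambda^n$ finite. Blue paths: degree in $\mathbb Ne_1$; red paths: degree in $\mathbb Ne_2$. $\lambda(m,n)$ is the unique path with $\lambda=\lambda'\lambda(m,n)\lambda''$, $d(\lambda')=m$, $d(\lambda(m,n))=n-m$; $\lambda(n)=\lambda(n,n)$. A cycle: $d(\lambda)\ne0$, $r(\lambda)=s(\lambda)$, $\lambda(n)\ne s(\lambda)$ for $0<n<d(\lambda)$; isolated: no $n\le d(\lambda)$ with $r(\lambda)\Lambda^n\setminus\{\lambda(0,n)\}\ne\emptyset$ and no $n\le d(\lambda)$ with $\Lambda^ns(\lambda)\setminus\{\lambda(d(\lambda)-n,d(\lambda))\}\ne\emptyset$. A rank-2 Bratteli diagram of depth $N\in\mathbb N\cup\{\infty\}$ is a row-finite 2-graph with $\Lambda^0=\bigsqcup_{0\le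 n\le N}V_n$ (all $n\in\mathbb N$ if $N=\infty$), each $V_n$ nonempty finite, such that: every blue edge $e$ has $r(e)\in V_n,s(e)\in V_{n+1}$ for some $n$; every vertex $v$ with $\Lambda^{e_1}v=\emptyset$ lies in $V_0$ and every $v$ with $v\Lambda^{e_1}=\emptyset$ lies in $V_N$ (none if $N=\infty$); every vertex lies on an isolated cycle of red edges and every red edge has range and source in the same $V_n$. For a blue path $\alpha$, let $f$ be the unique red edge with $s(f)=r(\alpha)$ and $\mathcal F(\alpha)$ the unique blue path with $f\alpha=\mathcal F(\alpha)f'$ for a red edge $f'$; $o(\alpha)=\min\{k>0:\mathcal F^k(\alpha)=\alpha\}$. $\Omega_2$ is the 2-graph with objects $\mathbb N^2$, morphisms $(m,n)$ for $m\le n$, $r(m,n)=m,s(m,n)=n,d(m,n)=n-m$. An infinite path is a degree-preserving functor $x:\Omega_2\to\Lambda$; write $x(m,n)$ for the image of $(m,n)$; for $p\in\mathbb N^2$, $\sigma^p(x)$ is the infinite path $(m,n)\mapsto x(m+p,n+p)$. *)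

(* Defs.v *)
From Stdlib Require Import Arith List.

Definition N2 := (nat * nat)%type.
Definition n2add (m n : N2) : N2 := (fst m + fst n, snd m + snd n).
Definition n2sub (m n : N2) : N2 := (fst m - fst n, snd m - snd n).
Definition n2le (m n : N2) : Prop := fst m <= fst n /\ snd m <= snd n.
Definition n2zero : N2 := (0, 0).
Definition e1 : N2 := (1, 0).
Definition e2 : N2 := (0, 1).

(* The data of a small category Lambda with a functor d : Lambda -> N^2.
   Composition [cmp a b] is the path "a b" (a after b), meaningful when
   [src a = rng b]. *)
Record TwoGraphData := {
  Obj : Type;
  Mor : Type;
  rng : Mor -> Obj;
  src : Mor -> Obj;
  deg : Mor -> N2;
  idm : Obj -> Mor;
  cmp : Mor -> Mor -> Mor
}.

Section Defs.
Variable L : TwoGraphData.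

(* Lambda is a countable category, d is a functor, unique factorisation. *)
Definition is_2graph : Prop :=
  (exists f : Mor L -> nat, forall a b, f a = f b -> a = b) /\
  (exists g : Obj L -> nat, forall u v, g u = g v -> u = v) /\
  (forall v, rng L (idm L v) = v /\ src L (idm L v) = v /\
             deg L (idm L v) = n2zero) /\
  (forall a b, src L a = rng L b ->
      rng L (cmp L a b) = rng L a /\ src L (cmp L a b) = src L b /\
      deg L (cmp L a b) = n2add (deg L a) (deg L b)) /\
  (forall a, cmp L (idm L (rng L a)) a = a /\ cmp L a (idm L (src L a)) = a) /\
  (forall a b c, src L a = rng L b -> src L b = rng L c ->
      cmp L (cmp L a b) c = cmp L a (cmp L b c)) /\
  (forall l m n, deg L l = n2add m n ->
      (exists mu nu, deg L mu = m /\ deg L nu = n /\ src L mu = rng L nu /\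
                     cmp L mu nu = l) /\
      (forall mu nu mu' nu',
         deg L mu = m -> deg L nu = n -> src L mu = rng L nu -> cmp L mu nu = l ->
         deg L mu' = m -> deg L nu' = n -> src L mu' = rng L nu' -> cmp L mu' nu' = l ->
         mu = mu' /\ nu = nu')).

Definition row_finite : Prop :=
  forall (v : Obj L) (n : N2), exists ls : list (Mor L),
    forall l, rng L l = v -> deg L l = n -> In l ls.

(* [seg l m n mu] : mu = l(m,n), i.e. l = l' mu l'' with d(l') = m and
   d(mu) = n - m (for m <= n <= d(l)). *)
Definition seg (l : Mor L) (m n : N2) (mu : Mor L) : Prop :=
  exists l1 l2, deg L l1 = m /\ deg L mu = n2sub n m /\
    src L l1 = rng L mu /\ src L mu = rng L l2 /\
    cmp L (cmp L l1 mu) l2 = l.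

Definition is_cycle (l : Mor L) : Prop :=
  deg L l <> n2zero /\ rng L l = src L l /\
  forall n, n2le n (deg L l) -> n <> n2zero -> n <> deg L l ->
    forall mu, seg l n n mu -> mu <> idm L (src L l).

Definition is_isolated (l : Mor L) : Prop :=
  (forall n, n2le n (deg L l) -> forall mu,
      rng L mu = rng L l -> deg L mu = n -> seg l n2zero n mu) /\
  (forall n, n2le n (deg L l) -> forall mu,
      src L mu = src L l -> deg L mu = n -> seg l (n2sub (deg L l) n) (deg L l) mu).

Definition is_blue (l : Mor L) : Prop := exists k, deg L l = (k, 0).
Definition is_red (l : Mor L) : Prop := exists k, deg L l = (0, k).

(* Rank-2 Bratteli diagram of depth N (None = infinity); the vertex of level
   n form V_n, i.e. V_n = { v | lev v = n }. *)
Definition in_depth (N : option nat) (n : nat) : Prop :=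
  match N with Some k => n <= k | None => True end.

Definition is_bratteli (N : option nat) (lev : Obj L -> nat) : Prop :=
  is_2graph /\ row_finite /\
  (* Lambda^0 is the disjoint union of the V_n, 0 <= n <= N *)
  (forall v, in_depth N (lev v)) /\
  (forall n, in_depth N n ->
      (exists v, lev v = n) /\
      (exists vs : list (Obj L), forall v, lev v = n -> In v vs)) /\
  (forall e, deg L e = e1 -> lev (src L e) = S (lev (rng L e))) /\
  (forall v, (forall e, deg L e = e1 -> src L e <> v) -> lev v = 0) /\
  (forall v, (forall e, deg L e = e1 -> rng L e <> v) ->
      match N with Some k => lev v = k | None => False end) /\
  (forall v, exists l, is_red l /\ is_cycle l /\ is_isolated l /\
      exists k, n2le k (deg L l) /\ seg l k k (idm L v)) /\
  (forall f, deg L f = e2 -> lev (rng L f) = lev (src L f)).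

Definition Frel (a b : Mor L) : Prop :=
  exists f f', deg L f = e2 /\ src L f = rng L a /\ deg L f' = e2 /\
    deg L b = deg L a /\ src L b = rng L f' /\ cmp L f a = cmp L b f'.

Inductive Fpow : nat -> Mor L -> Mor L -> Prop :=
  | Fpow0 : forall a, Fpow 0 a a
  | FpowS : forall k a b c, Fpow k a b -> Frel b c -> Fpow (S k) a c.

(* o(alpha) >= K, where o(alpha) = min { k > 0 : F^k(alpha) = alpha }
   (min of the empty set being infinity). *)
Definition order_ge (a : Mor L) (K : nat) : Prop :=
  forall k, 0 < k -> k < K -> ~ Fpow k a a.

(* Infinite path: a degree-preserving functor Omega_2 -> Lambda, given by its
   action x m n = x(m,n) on morphisms (m,n), m <= n (values for m not <= n
   are irrelevant); the object map is m |-> r(x(m,m)). *)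
Definition is_infpath (x : N2 -> N2 -> Mor L) : Prop :=
  (forall m n, n2le m n -> deg L (x m n) = n2sub n m) /\
  (forall m, x m m = idm L (rng L (x m m))) /\
  (forall m n, n2le m n -> rng L (x m n) = rng L (x m m) /\
                           src L (x m n) = rng L (x n n)) /\
  (forall m n p, n2le m n -> n2le n p -> cmp L (x m n) (x n p) = x m p).

Definition shift (p : N2) (x : N2 -> N2 -> Mor L) : N2 -> N2 -> Mor L :=
  fun m n => x (n2add m p) (n2add n p).

Definition infpath_eq (x y : N2 -> N2 -> Mor L) : Prop :=
  forall m n, n2le m n -> x m n = y m n.

End Defs.

(* Main.v *)
Require Import Defs.
From Stdlib Require Import Arith List Lia Classical FinFun.
Ltac n2s := unfold n2add, n2sub, n2zero, n2le, e1, e2 in *; simpl in *.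


Lemma g_cmp (L : TwoGraphData) (HG : is_2graph L) a b :
  src L a = rng L b ->
  rng L (cmp L a b) = rng L a /\ src L (cmp L a b) = src L b /\
  deg L (cmp L a b) = n2add (deg L a) (deg L b).
Proof. destruct HG as (_ & _ & _ & H & _). apply H. Qed.

Lemma g_id (L : TwoGraphData) (HG : is_2graph L) v :
  rng L (idm L v) = v /\ src L (idm L v) = v /\ deg L (idm L v) = n2zero.
Proof. destruct HG as (_ & _ & H & _). apply H. Qed.

Lemma g_idl (L : TwoGraphData) (HG : is_2graph L) a : cmp L (idm L (rng L a)) a = a.
Proof. destruct HG as (_ & _ & _ & _ & H & _). apply H. Qed.

Lemma g_idr (L : TwoGraphData) (HG : is_2graph L) a : cmp L a (idm L (src L a)) = a.
Proof. destruct HG as (_ & _ & _ & _ & H & _). apply H. Qed.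

Lemma g_assoc (L : TwoGraphData) (HG : is_2graph L) a b c :
  src L a = rng L b -> src L b = rng L c ->
  cmp L (cmp L a b) c = cmp L a (cmp L b c).
Proof. destruct HG as (_ & _ & _ & _ & _ & H & _). apply H. Qed.

Lemma g_fex (L : TwoGraphData) (HG : is_2graph L) l m n :
  deg L l = n2add m n ->
  exists mu nu, deg L mu = m /\ deg L nu = n /\ src L mu = rng L nu /\ cmp L mu nu = l.
Proof. destruct HG as (_ & _ & _ & _ & _ & _ & H). apply H. Qed.

Lemma g_funiq (L : TwoGraphData) (HG : is_2graph L) mu nu mu' nu' :
  deg L mu = deg L mu' -> deg L nu = deg L nu' ->
  src L mu = rng L nu -> src L mu' = rng L nu' ->
  cmp L mu nu = cmp L mu' nu' -> mu = mu' /\ nu = nu'.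
Proof.
  intros D1 D2 S1 S2 E.
  pose proof HG as (_ & _ & _ & _ & _ & _ & H).
  destruct (H (cmp L mu nu) (deg L mu) (deg L nu)) as [_ U].
  - apply (g_cmp L HG _ _ S1).
  - apply (U mu nu mu' nu'); auto.
Qed.

Lemma g_deg0 (L : TwoGraphData) (HG : is_2graph L) mu :
  deg L mu = n2zero -> mu = idm L (src L mu) /\ rng L mu = src L mu.
Proof.
  intros D.
  destruct (g_id L HG (rng L mu)) as (R1 & S1 & D1).
  destruct (g_id L HG (src L mu)) as (R2 & S2 & D2).
  destruct (g_funiq L HG (idm L (rng L mu)) mu mu (idm L (src L mu))) as [E1 E2].
  - congruence.
  - congruence.
  - congruence.
  - congruence.
  - rewrite g_idl, g_idr; auto.
  - split; [auto|]. rewrite E2 at 1. rewrite R2. reflexivity.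
Qed.

Lemma red_edge_uniq (L : TwoGraphData) N lev (HB : is_bratteli L N lev) e e' :
  deg L e = e2 -> deg L e' = e2 -> src L e = src L e' -> e = e'.
Proof.
  intros De De' Se.
  destruct HB as (HG & _ & _ & _ & _ & _ & _ & Hcyc & _).
  destruct (Hcyc (src L e)) as (l & [c Hc] & (Hnz & Hrs & _) & (_ & Hiso) & k & Hk & Hseg).
  set (v := src L e) in *.
  assert (Hc1 : 1 <= c).
  { destruct c; [|lia]. exfalso. apply Hnz. rewrite Hc. reflexivity. }
  assert (Hdec : exists L1 l2 k', 1 <= k' <= c /\ l = cmp L L1 l2 /\ src L L1 = v /\
            rng L l2 = v /\ deg L L1 = (0, k') /\ deg L l2 = (0, c - k') /\ src L l2 = src L l).
  { destruct Hseg as (l1 & l2 & D1 & _ & S1 & S2 & E).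
    destruct (g_id L HG v) as (Rv & Sv & Dv).
    rewrite Rv in S1. rewrite Sv in S2.
    rewrite <- S1 in E. rewrite g_idr in E by exact HG.
    destruct (g_cmp L HG l1 l2 (eq_trans S1 S2)) as (Rl & Sl & Dl).
    rewrite E in Rl, Sl, Dl.
    destruct k as [k1 k2]. n2s.
    destruct (deg L l2) as [d1 d2] eqn:Dl2.
    rewrite Hc, D1 in Dl. injection Dl as Dl1 Dl2'.
    destruct (Nat.eq_dec k2 0) as [Hk2|Hk2].
    - assert (k1 = 0) by lia. subst k1 k2.
      destruct (g_deg0 L HG l1 D1) as [_ Rl1].
      exists l, (idm L v), c. split; [lia|].
      assert (Slv : src L l = v) by congruence.
      split. { rewrite <- Slv. rewrite g_idr by exact HG. reflexivity. }
      split. { exact Slv. }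
      split. { exact Rv. }
      split. { exact Hc. }
      split. { rewrite Dv. f_equal. lia. }
      rewrite Sv. symmetry. exact Slv.
    - exists l1, l2, k2. split; [lia|].
      split; [symmetry; exact E|]. split; [exact S1|]. split; [symmetry; exact S2|].
      split. { rewrite D1. f_equal. lia. }
      split. { rewrite Dl2. f_equal; lia. }
      symmetry; exact Sl. }
  destruct Hdec as (L1 & l2 & k' & Hk' & El & SL1 & Rl2 & DL1 & Dl2 & Sl2).
  assert (Key : forall g, deg L g = e2 -> src L g = v ->
            exists m1, cmp L m1 g = L1 /\ deg L m1 = (0, k' - 1) /\ src L m1 = rng L g).
  { intros g Dg Sg.
    assert (Sgl : src L g = rng L l2) by congruence.
    destruct (g_cmp L HG g l2 Sgl) as (Rmu & Smu & Dmu).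
    set (mu := cmp L g l2) in *.
    rewrite Dg, Dl2 in Dmu. n2s.
    destruct (Hiso (deg L mu)) with (mu := mu) as (m1 & m2 & Dm1 & _ & Sm1 & Sm2 & Em).
    { rewrite Dmu, Hc. n2s. lia. }
    { congruence. }
    { reflexivity. }
    rewrite Dmu, Hc in Dm1. n2s.
    destruct (g_cmp L HG m1 mu Sm1) as (R1 & S1 & D1).
    destruct (g_cmp L HG (cmp L m1 mu) m2 (eq_trans S1 Sm2)) as (R2 & S2 & D2).
    rewrite Em, Hc, D1, Dm1, Dmu in D2. n2s.
    destruct (deg L m2) as [a b] eqn:Dm2.
    injection D2 as D2a D2b.
    assert (Dm2' : deg L m2 = n2zero) by (rewrite Dm2; unfold n2zero; f_equal; lia).
    destruct (g_deg0 L HG m2 Dm2') as [Em2 Rm2].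
    assert (Sm2' : src L m2 = src L (cmp L m1 mu)) by congruence.
    rewrite Em2, Sm2', g_idr in Em by exact HG.
    assert (Sm1g : src L m1 = rng L g) by congruence.
    unfold mu in Em. rewrite <- g_assoc in Em by auto.
    destruct (g_cmp L HG m1 g Sm1g) as (_ & S3 & D3).
    destruct (g_funiq L HG (cmp L m1 g) l2 L1 l2) as [E1 _]; auto.
    - rewrite D3, Dm1, Dg, DL1. n2s. f_equal. lia.
    - congruence.
    - congruence.
    - congruence.
    - exists m1. split; [exact E1|]. split; [rewrite Dm1; f_equal; lia|exact Sm1g]. }
  destruct (Key e De eq_refl) as (m1 & E1 & D1 & S1).
  destruct (Key e' De' (eq_sym Se)) as (m1' & E1' & D1' & S1').
  destruct (g_funiq L HG m1 e m1' e') as [_ E]; auto; congruence.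
Qed.

Lemma red_path_uniq (L : TwoGraphData) N lev (HB : is_bratteli L N lev) c :
  forall mu nu, deg L mu = (0, c) -> deg L nu = (0, c) -> src L mu = src L nu -> mu = nu.
Proof.
  pose proof HB as (HG & _).
  induction c as [|c IH]; intros mu nu Dm Dn Sm.
  - destruct (g_deg0 L HG mu Dm) as [E1 _]. destruct (g_deg0 L HG nu Dn) as [E2 _].
    rewrite E1, E2, Sm. reflexivity.
  - destruct (g_fex L HG mu (0, c) (0, 1)) as (m1 & g & Dm1 & Dg & Sg & Eg).
    { rewrite Dm. n2s. f_equal. lia. }
    destruct (g_fex L HG nu (0, c) (0, 1)) as (n1 & h & Dn1 & Dh & Sh & Eh).
    { rewrite Dn. n2s. f_equal. lia. }
    destruct (g_cmp L HG m1 g Sg) as (_ & S1 & _).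
    destruct (g_cmp L HG n1 h Sh) as (_ & S2 & _).
    assert (gh : g = h).
    { apply (red_edge_uniq L N lev HB); auto. rewrite <- S1, <- S2, Eg, Eh. exact Sm. }
    subst h. rewrite <- Eg, <- Eh. f_equal. apply IH; auto. congruence.
Qed.
Ltac le2 := unfold n2le; simpl; lia.

Lemma xdeg (L : TwoGraphData) x (HX : is_infpath L x) a b c d :
  a <= c -> b <= d -> deg L (x (a,b) (c,d)) = (c - a, d - b).
Proof. intros; destruct HX as (HH & _). apply HH. le2. Qed.

Lemma xrng (L : TwoGraphData) x (HX : is_infpath L x) a b c d :
  a <= c -> b <= d -> rng L (x (a,b) (c,d)) = rng L (x (a,b) (a,b)).
Proof. intros; destruct HX as (_ & _ & HH & _). apply HH. le2. Qed.

Lemma xsrc (L : TwoGraphData) x (HX : is_infpath L x) a b c d :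
  a <= c -> b <= d -> src L (x (a,b) (c,d)) = rng L (x (c,d) (c,d)).
Proof. intros; destruct HX as (_ & _ & HH & _). apply HH. le2. Qed.

Lemma xcmp (L : TwoGraphData) x (HX : is_infpath L x) a b c d e f :
  a <= c -> b <= d -> c <= e -> d <= f ->
  cmp L (x (a,b) (c,d)) (x (c,d) (e,f)) = x (a,b) (e,f).
Proof. intros; destruct HX as (_ & _ & _ & HH). apply HH; le2. Qed.

Lemma lev_formula (L : TwoGraphData) N lev (HB : is_bratteli L N lev) x (HX : is_infpath L x) :
  forall a b, lev (rng L (x (a,b) (a,b))) = lev (rng L (x (0,0) (0,0))) + a.
Proof.
  destruct HB as (HG & _ & _ & _ & Hblue & _ & _ & _ & Hred).
  assert (Hc : forall b, lev (rng L (x (0,b) (0,b))) = lev (rng L (x (0,0) (0,0)))).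
  { induction b as [|b IH]; [reflexivity|].
    rewrite <- IH.
    pose proof (Hred (x (0,b) (0, S b))) as H.
    rewrite (xrng L x HX), (xsrc L x HX) in H by lia.
    symmetry; apply H. rewrite (xdeg L x HX) by lia. unfold e1, e2; f_equal; lia. }
  intros a b. induction a as [|a IH].
  - rewrite Hc. lia.
  - pose proof (Hblue (x (a,b) (S a, b))) as H.
    rewrite (xrng L x HX), (xsrc L x HX) in H by lia.
    rewrite H. rewrite IH. lia. rewrite (xdeg L x HX) by lia. unfold e1, e2; f_equal; lia.
Qed.

Lemma Fpow_rows (L : TwoGraphData) x (HX : is_infpath L x) n :
  forall k j, Fpow L k (x (0, k + j) (n, k + j)) (x (0, j) (n, j)).
Proof.
  induction k as [|k IH]; intros j.
  - apply Fpow0.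
  - replace (S k + j) with (k + S j) by lia. econstructor. apply IH.
    exists (x (0,j) (0, S j)), (x (n,j) (n, S j)).
    split. { rewrite (xdeg L x HX) by lia. unfold e1, e2; f_equal; lia. }
    split. { rewrite (xsrc L x HX), (xrng L x HX 0 (S j) n (S j)) by lia. reflexivity. }
    split. { rewrite (xdeg L x HX) by lia. unfold e1, e2; f_equal; lia. }
    split. { rewrite !(xdeg L x HX) by lia. f_equal; lia. }
    split. { rewrite (xsrc L x HX), (xrng L x HX n j n (S j)) by lia. reflexivity. }
    rewrite !(xcmp L x HX) by lia. reflexivity.
Qed.

Lemma row_inj (L : TwoGraphData) N lev (HB : is_bratteli L N lev) x (HX : is_infpath L x) n b K :
  x (0,b) (n,b) = x (0,b+K) (n,b+K) -> x (0,0) (n,0) = x (0,K) (n,K).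
Proof.
  intros E. pose proof HB as (HG & _).
  assert (Er : x (0,0) (0,b) = x (0,K) (0,b+K)).
  { apply (red_path_uniq L N lev HB b).
    - rewrite (xdeg L x HX) by lia. f_equal; lia.
    - rewrite (xdeg L x HX) by lia. f_equal; lia.
    - rewrite !(xsrc L x HX) by lia.
      rewrite <- (xrng L x HX 0 b n b), <- (xrng L x HX 0 (b+K) n (b+K)) by lia.
      rewrite E. reflexivity. }
  assert (E2 : cmp L (x (0,0) (n,0)) (x (n,0) (n,b)) = cmp L (x (0,K) (n,K)) (x (n,K) (n,b+K))).
  { rewrite !(xcmp L x HX) by lia.
    rewrite <- (xcmp L x HX 0 0 0 b n b) by lia.
    rewrite <- (xcmp L x HX 0 K 0 (b+K) n (b+K)) by lia.
    rewrite Er, E. reflexivity. }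
  apply (g_funiq L HG) in E2. destruct E2; auto.
  - rewrite !(xdeg L x HX) by lia. f_equal; lia.
  - rewrite !(xdeg L x HX) by lia. f_equal; lia.
  - rewrite (xsrc L x HX), (xrng L x HX n 0 n b) by lia. reflexivity.
  - rewrite (xsrc L x HX), (xrng L x HX n K n (b+K)) by lia. reflexivity.
Qed.

Lemma pigeon (A : Type) (l : list A) (f : nat -> A) :
  (forall j, In (f j) l) -> exists i j, i < j /\ f i = f j.
Proof.
  intros Hin. apply NNPP. intros Hno.
  assert (Hinj : forall i j, f i = f j -> i = j).
  { intros i j Eij. destruct (lt_eq_lt_dec i j) as [[H|H]|H]; auto.
    - exfalso; apply Hno; eauto.
    - exfalso; apply Hno; eauto. }
  assert (ND : NoDup (map f (seq 0 (S (length l))))).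
  { apply FinFun.Injective_map_NoDup; [exact Hinj|apply seq_NoDup]. }
  apply NoDup_incl_length with (l' := l) in ND.
  - rewrite length_map, length_seq in ND. lia.
  - intros y Hy. apply in_map_iff in Hy. destruct Hy as (j & <- & _). apply Hin.
Qed.

Lemma paths_list (L : TwoGraphData) (Hrf : row_finite L) (dg : N2) :
  forall vs : list (Obj L), exists ls, forall l, In (rng L l) vs -> deg L l = dg -> In l ls.
Proof.
  induction vs as [|v vs IH].
  - exists nil. intros l [].
  - destruct IH as [ls Hls]. destruct (Hrf v dg) as [lv Hlv].
    exists (lv ++ ls). intros l [Hv|Hv] Hd; apply in_or_app.
    + left. apply Hlv; auto.
    + right. apply Hls; auto.
Qed.

Lemma main_aux (L : TwoGraphData) (N : option nat) (lev : Obj L -> nat)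
  (x : N2 -> N2 -> Mor L) (HB : is_bratteli L N lev) (HX : is_infpath L x)
  (Hord : forall K : nat, exists n0 : nat, forall n : nat, n0 <= n ->
     order_ge L (x n2zero (n, 0)) K)
  P1 P2 d (Hd : 0 < d)
  (Hper : forall m n, n2le m n ->
     x (n2add m (P1,P2)) (n2add n (P1,P2)) = x (n2add m (P1,P2+d)) (n2add n (P1,P2+d))) :
  False.
Proof.
  pose proof HB as (HG & Hrf & Hdep & Hfin & _).
  assert (Tail : forall b n, P2 <= b -> P1 <= n -> x (P1,b) (n,b) = x (P1,b+d) (n,b+d)).
  { intros b n Hb Hn.
    specialize (Hper (0, b - P2) (n - P1, b - P2)).
    unfold n2add in Hper; simpl in Hper.
    replace (b - P2 + P2) with b in Hper by lia.
    replace (n - P1 + P1) with n in Hper by lia.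
    replace (b - P2 + (P2 + d)) with (b + d) in Hper by lia.
    apply Hper. unfold n2le; simpl; lia. }
  assert (Tj : forall j n, P1 <= n -> x (P1,P2) (n,P2) = x (P1,P2 + j*d) (n,P2 + j*d)).
  { induction j as [|j IH]; intros n Hn.
    - replace (P2 + 0 * d) with P2 by lia. reflexivity.
    - replace (P2 + S j * d) with (P2 + j * d + d) by lia.
      rewrite IH by exact Hn. apply Tail; lia. }
  set (lev0 := lev (rng L (x (0,0) (0,0)))).
  destruct (Hfin lev0 (Hdep _)) as [_ [vs Hvs]].
  destruct (paths_list L Hrf (P1, 0) vs) as [ls Hls].
  set (f := fun j => x (0, P2 + j*d) (P1, P2 + j*d)).
  assert (Hin : forall j, In (f j) ls).
  { intros j. apply Hls.
    - apply Hvs. unfold f. rewrite (xrng L x HX) by lia.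
      rewrite (lev_formula L N lev HB x HX). unfold lev0. lia.
    - unfold f. rewrite (xdeg L x HX) by lia. f_equal; lia. }
  destruct (pigeon _ ls f Hin) as (i & j & Hij & Efij).
  set (K := (j - i) * d).
  assert (HK : 0 < K) by (unfold K; apply Nat.mul_pos_pos; lia).
  assert (Hrow : forall n, P1 <= n -> x (0,0) (n,0) = x (0,K) (n,K)).
  { intros n Hn.
    apply (row_inj L N lev HB x HX n (P2 + i*d) K).
    assert (Eb : P2 + i * d + K = P2 + j * d).
    { unfold K. rewrite Nat.mul_sub_distr_r.
      assert (i * d <= j * d) by (apply Nat.mul_le_mono_r; lia). lia. }
    rewrite Eb.
    rewrite <- (xcmp L x HX 0 (P2 + i*d) P1 (P2 + i*d) n (P2 + i*d)) by lia.
    rewrite <- (xcmp L x HX 0 (P2 + j*d) P1 (P2 + j*d) n (P2 + j*d)) by lia.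
    rewrite <- !Tj by exact Hn.
    unfold f in Efij. rewrite Efij. reflexivity. }
  destruct (Hord (S K)) as [n0 Hn0].
  apply (Hn0 (Nat.max n0 P1) ltac:(lia) K HK ltac:(lia)).
  pose proof (Fpow_rows L x HX (Nat.max n0 P1) K 0) as F.
  rewrite Nat.add_0_r in F. rewrite <- Hrow in F by lia.
  exact F.
Qed.

Theorem lemma5p4 (L : TwoGraphData) (N : option nat) (lev : Obj L -> nat)
  (x : N2 -> N2 -> Mor L) :
  is_bratteli L N lev ->
  is_infpath L x ->
  (forall K : nat, exists n0 : nat, forall n : nat, n0 <= n ->
     order_ge L (x n2zero (n, 0)) K) ->
  forall p q : N2, infpath_eq L (shift L p x) (shift L q x) -> p = q.
Proof.
  intros HB HX Hord [p1 p2] [q1 q2] Heq.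
  unfold infpath_eq, shift in Heq.
  assert (E0 := Heq n2zero n2zero ltac:(unfold n2le; simpl; lia)).
  unfold n2add, n2zero in E0; simpl in E0.
  assert (Ev : rng L (x (p1,p2) (p1,p2)) = rng L (x (q1,q2) (q1,q2))) by (rewrite E0; reflexivity).
  apply (f_equal lev) in Ev.
  rewrite (lev_formula L N lev HB x HX p1 p2), (lev_formula L N lev HB x HX q1 q2) in Ev.
  assert (p1 = q1) by lia. subst q1.
  destruct (lt_eq_lt_dec p2 q2) as [[H|H]|H].
  - exfalso. apply (main_aux L N lev x HB HX Hord p1 p2 (q2 - p2) ltac:(lia)).
    replace (p2 + (q2 - p2)) with q2 by lia. exact Heq.
  - subst; reflexivity.
  - exfalso. apply (main_aux L N lev x HB HX Hord p1 q2 (p2 - q2) ltac:(lia)).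
    replace (q2 + (p2 - q2)) with p2 by lia.
    intros m n Hmn. symmetry. apply Heq. exact Hmn.
Qed.
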